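(* Let $i\geq 1$. For $n\geq 0$, let $T(i,n)$ be the set of pairs $(L_1,L_2)$ of walks of length $n$ with steps $(1,1)$ and $(1,-1)$, where $L_1$ starts at $(0,0)$ and $L_2$ starts at $(0,2i)$, such that $(L_1,L_2)$ is converging, i.e., $L_1$ and $L_2$ share no common point before they reach a common ending point (at $x=n$). Let $T_i(t)=\sum_{n\geq 0}|T(i,n)|t^n$. Let $C(t)=\sum_{n\geq0}\frac{1}{n+1}\binom{2n}{n}t^n$ be the generating function of the Catalan numbers and $D(t)=tC^2(t)$. Then $T_i(t)=D^i(t)$. *)

(* Defs.v *)
From mathcomp Require Import all_boot all_order all_algebra.
Set Implicit Arguments. Unset Strict Implicit. Unset Printing Implicit Defensive.
Import Order.TTheory GRing.Theory Num.Theory.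

(* A walk of length n with steps (1,1) / (1,-1) is encoded by its sequence of
   n steps: true = up (1,1), false = down (1,-1). *)

Definition disp (s : seq bool) (k : nat) : int :=
  (\sum_(b <- take k s) (if b then 1 else -1))%R.

Definition converging (i n : nat) (s1 s2 : n.-tuple bool) : bool :=
  [forall k : 'I_n, disp s1 k != ((2 * i)%:Z + disp s2 k)%R]
  && (disp s1 n == ((2 * i)%:Z + disp s2 n)%R).

Definition T_card (i n : nat) : nat :=
  #|[set p : n.-tuple bool * n.-tuple bool | converging i p.1 p.2]|.

Definition ser := nat -> nat.
Definition ser_mul (f g : ser) : ser :=
  fun n => \sum_(k < n.+1) f k * g (n - k).
Definition ser_one : ser := fun n => if n is 0 then 1 else 0.
Definition ser_exp (f : ser) (i : nat) : ser := iter i (ser_mul f) ser_one.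

Definition catalan (n : nat) : nat := 'C(n.*2, n) %/ n.+1.
Definition Cser : ser := catalan.
Definition Dser : ser := fun n => if n is m.+1 then ser_mul Cser Cser m else 0.

(* Main.v *)
Require Import Defs.
From mathcomp Require Import all_boot all_order all_algebra.
From mathcomp Require Import zify.
Import GRing.Theory Num.Theory.
Set Implicit Arguments. Unset Strict Implicit. Unset Printing Implicit Defensive.

Fixpoint g (j n : nat) {struct n} : nat :=
  match n with
  | 0 => (j == 0)
  | n'.+1 => match j with
             | 0 => 0
             | j'.+1 => g j' n' + 2 * g j n' + g j.+1 n'
             end
  end.

Lemma gS j n : g j.+1 n.+1 = g j n + 2 * g j.+1 n + g j.+2 n.
Proof. by []. Qed.

Lemma g_closed m j : g j m.+1 + 'C(m.*2.+1, m + j.+1) = 'C(m.*2.+1, m + j).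
Proof.
elim: m j => [|m IH] [|j].
- by [].
- case: j => [|j] //=.
- rewrite /= add0n addn0 addn1.
  have h := bin_sub (n := m.+1.*2.+1) (m := m.+1).
  rewrite (_ : m.+1.*2.+1 - m.+1 = m.+2) in h; last lia.
  rewrite h //; lia.
- rewrite gS (_ : m.+1.*2.+1 = (m.*2.+1).+2); last by rewrite doubleS.
  have h0 := IH j; have h1 := IH j.+1; have h2 := IH j.+2.
  rewrite ?addSn ?addnS in h0 h1 h2 *.
  set N := m.*2.+1 in h0 h1 h2 *.
  rewrite !(binS N.+1) !(binS N).
  lia.
Qed.

Lemma catalan_g m : catalan m.+1 = g 1 m.+1.
Proof.
rewrite /catalan.
have h := g_closed m 1. rewrite addn1 addn2 in h.
have h2 := mul_bin_left (m.*2.+1) m.+1.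
have h3 := bin_sub (n := m.*2.+1) (m := m).
rewrite (_ : m.*2.+1 - m = m.+1) in h3; last lia.
rewrite (_ : m.*2.+1 - m.+1 = m) in h2; last lia.
have h4 : (m.+1).*2 = (m.*2.+1).+1 by rewrite doubleS.
rewrite h4 binS -h3; last lia.
rewrite (_ : 'C(m.*2.+1, m.+1) + 'C(m.*2.+1, m.+1) = g 1 m.+1 * m.+2).
  by rewrite mulnK.
nia.
Qed.

Lemma ser_mul_ext f f' h h' n : (forall k, k <= n -> f k = f' k) ->
  (forall k, k <= n -> h k = h' k) -> ser_mul f h n = ser_mul f' h' n.
Proof.
move=> Hf Hh; apply: eq_bigr => k _.
by rewrite Hf ?Hh ?leq_subr // -ltnS.
Qed.

Local Open Scope ring_scope.
Lemma coefM_ser (p q : {poly int}) f h n :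
  (forall k, (k <= n)%N -> p`_k = (f k)%:R) ->
  (forall k, (k <= n)%N -> q`_k = (h k)%:R) ->
  (p * q)`_n = (ser_mul f h n)%:R.
Proof.
move=> Hp Hq; rewrite coefM /ser_mul natr_sum; apply: eq_bigr => k _.
by rewrite Hp ?Hq ?natrM ?leq_subr // -ltnS.
Qed.

Lemma coef_Pser (f : ser) n k : (k <= n)%N ->
  (\poly_(i < n.+1) ((f i)%:R : int))`_k = (f k)%:R.
Proof. by move=> hk; rewrite coef_poly ltnS hk. Qed.

Lemma ser_mulA a b c n :
  ser_mul (ser_mul a b) c n = ser_mul a (ser_mul b c) n.
Proof.
apply/eqP; rewrite -(eqr_nat int); apply/eqP.
set P := fun f : ser => \poly_(i < n.+1) ((f i)%:R : int).
rewrite -(@coefM_ser (P a * P b) (P c)); last first.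
- by move=> k hk; rewrite coef_Pser.
- move=> k hk; apply: coefM_ser => l hl; rewrite coef_Pser //; exact: leq_trans hl hk.
rewrite -(@coefM_ser (P a) (P b * P c)) ?mulrA //.
- by move=> k hk; rewrite coef_Pser.
- move=> k hk; apply: coefM_ser => l hl; rewrite coef_Pser //; exact: leq_trans hl hk.
Qed.
Local Close Scope ring_scope.

Lemma g_conv n : forall j, g j.+1 n = ser_mul (g 1) (g j) n.
Proof.
elim/ltn_ind: n => n IH j.
case: n IH => [|n] IH; first by rewrite /ser_mul big_ord1.
rewrite gS /ser_mul big_ord_recl /= mul0n add0n.
rewrite /bump /=.
under eq_bigr => k _ do rewrite add0n add1n subSS !mulnDl.
rewrite !big_split /=.
have A : \sum_(k < n.+1) g 0 k * g j (n - k) = g j n.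
  rewrite big_ord_recl /= mul1n subn0 big1 ?addn0 // => k _.
have B : \sum_(k < n.+1) g 1 k * g j (n - k) = g j.+1 n.
  by rewrite (IH n).
have Z : \sum_(k < n.+1) 0 * g j (n - k) = 0 by rewrite big1.
have C : \sum_(k < n.+1) g 2 k * g j (n - k) = g j.+2 n.
  transitivity (ser_mul (ser_mul (g 1) (g 1)) (g j) n).
    apply: ser_mul_ext => // k hk; exact: IH.
  rewrite ser_mulA (IH n) //.
  apply: ser_mul_ext => // k hk; rewrite IH //.
rewrite A B C Z; lia.
Qed.

Lemma ser_exp_g j n : ser_exp (g 1) j n = g j n.
Proof.
elim: j n => [|j IH] n; first by case: n.
rewrite /ser_exp /= g_conv; apply: ser_mul_ext => // k _; exact: IH.
Qed.

Lemma Dser_g n : Dser n = g 1 n.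
Proof.
case: n => [|m] //=.
have HC : forall k, Cser k = (k == 0) + g 1 k.
  by case=> [|k] //; rewrite /Cser catalan_g.
rewrite (ser_mul_ext (f' := fun k => (k == 0) + g 1 k) (h' := fun k => (k == 0) + g 1 k)) //.
rewrite /ser_mul.
under eq_bigr => k _ do rewrite mulnDl !mulnDr.
rewrite !big_split /= -/(ser_mul (g 1) (g 1) m) -g_conv.
rewrite big_ord_recl /= subn0 mul1n.
rewrite big1; last by move=> k _; rewrite /bump.
rewrite big_ord_recl /= mul1n subn0 big1; last by move=> k _; rewrite /bump.
rewrite big_ord_recr /= subnn muln1.
rewrite big1; last first.
  by move=> k _; rewrite subn_eq0 leqNgt ltn_ord /= muln0.
case: m => [|m] //=; lia.
Qed.
Definition e (b : bool) : int := if b then 1%R else (-1)%R.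

Fixpoint convR (c : int) (s1 s2 : seq bool) : bool :=
  match s1, s2 with
  | [::], [::] => c == 0%R
  | b1 :: t1, b2 :: t2 => (c != 0%R) && convR (c + e b2 - e b1)%R t1 t2
  | _, _ => false
  end.

Lemma disp0 s : disp s 0 = 0%R.
Proof. by rewrite /disp take0 big_nil. Qed.

Lemma dispS b s k : disp (b :: s) k.+1 = (e b + disp s k)%R.
Proof. by rewrite /disp /= big_cons. Qed.

Lemma forall_ordS n (P : nat -> bool) :
  [forall k : 'I_n.+1, P k] = P 0 && [forall k : 'I_n, P k.+1].
Proof.
apply/forallP/andP => [H|[H0 /forallP H] [[|k] hk]] //.
  split; first exact: (H ord0).
  by apply/forallP => k; exact: (H (lift ord0 k)).
exact: (H (Ordinal (hk : k < n))).
Qed.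

Lemma shift_eq (a b c x y : int) :
  (a + x != c + (b + y))%R = (x != c + b - a + y)%R.
Proof.
apply/negP/negP => H /eqP E; apply: H; apply/eqP; lia.
Qed.

Lemma conv_eq (c : int) n (s1 s2 : seq bool) : size s1 = n -> size s2 = n ->
  [forall k : 'I_n, disp s1 k != (c + disp s2 k)%R] && (disp s1 n == (c + disp s2 n)%R)
  = convR c s1 s2.
Proof.
elim: s1 n s2 c => [|b1 t1 IH] n [|b2 t2] c //=; try by move=> <-.
- move=> <- _; rewrite !disp0 addr0 eq_sym.
  by rewrite [X in X && _](_ : _ = true) //; apply/forallP => -[k hk].
- move=> <- [h2].
  rewrite (forall_ordS _ (fun k => disp (b1::t1) k != (c + disp (b2::t2) k)%R)) /= !dispS.
  have -> : disp (b2 :: t2) 0 = 0%R by rewrite /disp take0 big_nil.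
  rewrite addr0 -andbA; congr andb; first by rewrite /disp take0 big_nil eq_sym.
  rewrite -(IH (size t1) t2) //; congr andb.
    by apply: eq_forallb => k; rewrite !dispS; exact: shift_eq.
  apply: negb_inj; exact: shift_eq.
Qed.

Definition F (c : int) n :=
  \sum_(p : n.-tuple bool * n.-tuple bool) (convR c p.1 p.2 : nat).

Lemma T_F i n : T_card i n = F (2 * i)%:Z n.
Proof.
rewrite /T_card -sum1_card big_mkcond /F /=.
apply: eq_bigr => p _; rewrite inE /converging.
by rewrite (@conv_eq _ n) ?size_tuple //; case: convR.
Qed.

Lemma sum_tupleS (T : finType) n (G : n.+1.-tuple T -> nat) :
  \sum_t G t = \sum_(b : T) \sum_(t : n.-tuple T) G [tuple of b :: t].
Proof.
rewrite pair_big /=.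
rewrite (reindex (fun p : T * n.-tuple T => [tuple of p.1 :: p.2])) //=.
exists (fun t => (thead t, [tuple of behead t])) => [[b t] _ | t _].
  by congr pair; apply: val_inj.
by case/tupleP: t => b t; apply: val_inj.
Qed.

Lemma F0 c : F c 0 = (c == 0%R).
Proof.
rewrite /F (big_pred1 ([tuple], [tuple])) //.
by move=> [t1 t2]; rewrite /= (tuple0 t1) (tuple0 t2); apply/esym/eqP.
Qed.

Lemma FS c n : F c n.+1 = (c != 0%R) *
  (F (c + e true - e true)%R n + F (c + e false - e true)%R n +
  (F (c + e true - e false)%R n + F (c + e false - e false)%R n)).
Proof.
rewrite /F -(pair_big predT predT (fun t1 t2 : n.+1.-tuple bool => (convR c t1 t2 : nat))) /=.
rewrite sum_tupleS.
under eq_bigr => b1 _ do under eq_bigr => t1 _ do rewrite sum_tupleS.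
have pull : forall (b : bool) c',
    \sum_(t1 : n.-tuple bool) \sum_(t : n.-tuple bool) ((b && convR c' t1 t) : nat)
    = b * \sum_(p : n.-tuple bool * n.-tuple bool) (convR c' p.1 p.2 : nat).
  move=> b c'; rewrite pair_big big_distrr; apply: eq_bigr => p _; by case: b => /=; rewrite ?mul1n ?mul0n.
rewrite big_bool /=.
under eq_bigr => t1 _ do rewrite big_bool.
under [X in _ + X]eq_bigr => t1 _ do rewrite big_bool.
rewrite !big_split /= !pull /=.
rewrite !mulnDr; lia.
Qed.

Lemma F_g n : forall j, F (Posz (2 * j)) n = g j n.
Proof.
elim: n => [|n IH] j; first by rewrite F0; case: j.
rewrite FS; case: j => [|j]; first by [].
have E1 : ((Posz (2 * j.+1)) + e true - e true)%R = (Posz (2 * j.+1)) by rewrite /e; lia.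
have E2 : ((Posz (2 * j.+1)) + e false - e true)%R = (Posz (2 * j)) by rewrite /e; lia.
have E3 : ((Posz (2 * j.+1)) + e true - e false)%R = (Posz (2 * j.+2)) by rewrite /e; lia.
have E4 : ((Posz (2 * j.+1)) + e false - e false)%R = (Posz (2 * j.+1)) by rewrite /e; lia.
rewrite E1 E2 E3 E4 !IH gS.
have -> : ((Posz (2 * j.+1)) != 0%R) = true by apply/eqP; lia.
lia.
Qed.

Lemma ser_exp_D i n : ser_exp Dser i n = ser_exp (g 1) i n.
Proof.
elim: i n => [|i IH] n //=.
apply: ser_mul_ext => k _; [exact: Dser_g | exact: IH].
Qed.

Theorem proposition3p3 (i : nat) (hi : 1 <= i) :
  forall n : nat, T_card i n = ser_exp Dser i n.
Proof.
move=> n; rewrite T_F ser_exp_D ser_exp_g; exact: F_g.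
Qed.
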